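(* The intersection graph of $n$ horizontal and vertical line segments in the plane admits a $3$-hop spanner of size $O(n\log n)$.
   Context: The intersection graph has the segments as vertices, with an edge iff the two segments intersect. For a graph $G$ and integer $t\ge1$, a $t$-hop spanner is a subgraph $\widehat{G}$ of $G$ on the same vertex set such that for every edge $uv\in E(G)$ there is a $u$–$v$ path in $\widehat{G}$ with at most $t$ edges; its size is its number of edges. *)

(* Defs.v *)
From HB Require Import structures.
From mathcomp Require Import all_boot all_order all_algebra.
Set Implicit Arguments. Unset Strict Implicit. Unset Printing Implicit Defensive.
Import Order.TTheory GRing.Theory Num.Theory.

Local Open Scope ring_scope.

Definition segment (R : realFieldType) : Type := ((R * R) * (R * R))%type.

Definition hv_segment (R : realFieldType) (s : segment R) : Prop :=
  (s.1.1 = s.2.1) \/ (s.1.2 = s.2.2).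

Definition on_seg (R : realFieldType) (s : segment R) (z : R * R) : Prop :=
  exists t : R, 0 <= t /\ t <= 1 /\
    z = ((1 - t) * s.1.1 + t * s.2.1, (1 - t) * s.1.2 + t * s.2.2).

Definition seg_intersect (R : realFieldType) (s s' : segment R) : Prop :=
  exists z, on_seg s z /\ on_seg s' z.

Definition ig_edge (R : realFieldType) (n : nat) (s : 'I_n -> segment R)
  (u v : 'I_n) : Prop := u <> v /\ seg_intersect (s u) (s v).

Definition hop_path (T : finType) (H : rel T) (t : nat) (u v : T) : Prop :=
  exists p : seq T, path H u p /\ last u p = v /\ (size p <= t)%N.

Definition hop_spanner (T : finType) (G : T -> T -> Prop) (H : rel T)
  (t : nat) : Prop :=
  (forall u v, H u v = H v u) /\
  (forall u v, H u v -> G u v) /\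
  (forall u v, G u v -> hop_path H t u v).

Definition n_edges (n : nat) (H : rel 'I_n) : nat :=
  #|[set p : 'I_n * 'I_n | H p.1 p.2 && (p.1 < p.2)%N]|.

(* Main.v *)
Require Import Defs.
From HB Require Import structures.
From mathcomp Require Import all_boot all_order all_algebra.
From mathcomp Require Import zify ring lra.
Set Implicit Arguments. Unset Strict Implicit. Unset Printing Implicit Defensive.
Import Order.TTheory GRing.Theory Num.Theory.

Module MA.
Local Open Scope ring_scope.

Lemma ex_argmin (T : finType) (R : realDomainType) (P : pred T) (f : T -> R) t0 :
  P t0 -> exists2 t, P t & forall u, P u -> f t <= f u.
Proof.
move=> Pt0.
case: (@extremumP R T (fun a b => a <= b) t0 P f) => //.
- by move=> a b e; exact: le_trans.
- by move=> a b; exact: le_total.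
by move=> i Pi H; exists i.
Qed.

Lemma ex_argmax (T : finType) (R : realDomainType) (P : pred T) (f : T -> R) t0 :
  P t0 -> exists2 t, P t & forall u, P u -> f u <= f t.
Proof.
move=> /(ex_argmin (fun x => - f x)) [t Pt H]; exists t => // u Pu.
by rewrite -lerN2; apply: H.
Qed.

End MA.
Import MA.

Module MB.
Local Open Scope ring_scope.

Section Stab.
Variables (T : finType) (R : realFieldType) (isP isI : pred T) (y c d : T -> R).

Definition st p v := [&& isP p, isI v, c v <= y p & y p <= d v].
Definition covd p := [exists v, st p v].
Definition coverb (S : {set T}) :=
  [forall w in S, isI w] && [forall p, covd p ==> [exists B in S, st p B]].
Definition meets B v := [exists t, st t B && st t v].

Lemma coverP (S : {set T}) : coverb S ->
  (forall w, w \in S -> isI w) /\ (forall p v, st p v -> exists2 B, B \in S & st p B).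
Proof.
case/andP => /forall_inP H1 /forallP H2; split => // p v spv.
have /implyP/(_ _)/exists_inP := H2 p; apply.
by apply/existsP; exists v.
Qed.

Lemma coverI (S : {set T}) : (forall w, w \in S -> isI w) ->
  (forall p v, st p v -> exists2 B, B \in S & st p B) -> coverb S.
Proof.
move=> H1 H2; apply/andP; split; first by apply/forall_inP.
apply/forallP => p; apply/implyP => /existsP [v /H2 [B BS pB]].
by apply/exists_inP; exists B.
Qed.

Lemma cover_all : coverb [set w | isI w].
Proof.
apply: coverI => [w|p v spv]; first by rewrite inE.
by exists v => //; rewrite inE; case/and4P: spv.
Qed.

Lemma min_cover : exists S, coverb S /\ forall S', coverb S' -> (#|S| <= #|S'|)%N.
Proof.
case: (@arg_minnP _ [set w | isI w] coverb (fun S => #|S|) cover_all) => S cS H.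
by exists S.
Qed.


Lemma card_minus2 (M : {set T}) a b : (#|M| <= #|M :\: [set a; b]| + 2)%N.
Proof.
rewrite -(cardsID [set a; b] M) addnC leq_add2l.
apply: leq_trans (subset_leq_card (subsetIr _ _)) _.
by rewrite cards2; case: (a != b).
Qed.

Lemma K1 (S : {set T}) : coverb S -> (forall S', coverb S' -> (#|S| <= #|S'|)%N) ->
  forall p, (#|[set B in S | st p B]| <= 2)%N.
Proof.
move=> cS minS p; rewrite leqNgt; apply/negP => M3.
set M := [set B in S | st p B].
have {M3} M3 : (2 < #|M|)%N := M3.
have /card_gt0P [B0 B0M] : (0 < #|M|)%N by apply: leq_trans M3.
have [Bl BlM Blmin] := @ex_argmin _ _ (fun B => B \in M) c _ B0M.
have [Bh BhM Bhmax] := @ex_argmax _ _ (fun B => B \in M) d _ B0M.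
have : (0 < #|M :\: [set Bl; Bh]|)%N.
  by have := card_minus2 M Bl Bh; lia.
case/card_gt0P => B; rewrite in_setD in_set2 => /andP [/norP [BnBl BnBh] BM].
have := BM; rewrite inE => /andP [BS pB].
have := BlM; rewrite inE => /andP [BlS pBl].
have := BhM; rewrite inE => /andP [BhS pBh].
case/and4P: pB => Pp IB cBp pdB.
case/and4P: pBl => _ IBl cBlp pdBl.
case/and4P: pBh => _ IBh cBhp pdBh.
have cBlB := Blmin _ BM; have dBhB := Bhmax _ BM.
set S' := S :\ B.
have cS' : coverb S'.
  case: (coverP cS) => HI Hc; apply: coverI.
    by move=> w; rewrite inE => /andP [_ /HI].
  move=> p' v sp'v; case: (Hc _ _ sp'v) => B' B'S p'B'.
  case: (eqVneq B' B) => [eB'|nB']; last by exists B' => //; rewrite in_setD1 nB' B'S.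
  subst B'; case/and4P: p'B' => Pp' _ cBp' p'dB.
  case: (lerP (y p') (y p)) => hp.
    exists Bl; first by rewrite in_setD1 eq_sym BnBl BlS.
    rewrite /st Pp' IBl (le_trans cBlB cBp') (le_trans hp pdBl) //.
  exists Bh; first by rewrite in_setD1 eq_sym BnBh BhS.
  rewrite /st Pp' IBh (le_trans cBhp (ltW hp)) (le_trans p'dB dBhB) //.
have := minS _ cS'; rewrite [X in (X <= _)%N](cardsD1 B S) BS /= => h.
by move: h; rewrite ltnn.
Qed.

Lemma K2 (S : {set T}) : coverb S -> (forall S', coverb S' -> (#|S| <= #|S'|)%N) ->
  forall v, isI v -> (#|[set B in S | meets B v]| <= 3)%N.
Proof.
move=> cS minS v Iv; rewrite leqNgt; apply/negP => M3.
set M := [set B in S | meets B v].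
have {M3} M3 : (3 < #|M|)%N := M3.
have /card_gt0P [B0 B0M] : (0 < #|M|)%N by apply: leq_trans M3.
have [Bl BlM Blmin] := @ex_argmin _ _ (fun B => B \in M) c _ B0M.
have [Bh BhM Bhmax] := @ex_argmax _ _ (fun B => B \in M) d _ B0M.
have : (1 < #|M :\: [set Bl; Bh]|)%N.
  by have := card_minus2 M Bl Bh; lia.
case/card_gt1P => B1 [B2 [B1M' B2M' B12]].
have [B1M B1n] : B1 \in M /\ B1 \notin [set Bl; Bh].
  by move: B1M'; rewrite in_setD => /andP [].
have [B2M B2n] : B2 \in M /\ B2 \notin [set Bl; Bh].
  by move: B2M'; rewrite in_setD => /andP [].
have := BlM; rewrite inE => /andP [BlS /existsP [t1 /andP [t1Bl t1v]]].
have := BhM; rewrite inE => /andP [BhS /existsP [t2 /andP [t2Bh t2v]]].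
case/and4P: t1Bl => _ IBl cBl1 d1Bl.
case/and4P: t1v => _ _ cv1 d1v.
case/and4P: t2Bh => _ IBh cBh2 d2Bh.
case/and4P: t2v => _ _ cv2 d2v.
have B1S : B1 \in S by move: B1M; rewrite inE => /andP [].
have B2S : B2 \in S by move: B2M; rewrite inE => /andP [].
set X := [set B1; B2].
set S' := (S :\: X) :|: [set v].
have cS' : coverb S'.
  case: (coverP cS) => HI Hc; apply: coverI.
    move=> w; rewrite !inE => /orP [/andP [_ /HI] //| /eqP -> //].
  move=> p' u sp'u; case: (Hc _ _ sp'u) => B' B'S p'B'.
  case: (boolP (B' \in X)) => B'X; last by exists B' => //; rewrite in_setU in_setD B'X B'S.
  have [B'M B'n] : B' \in M /\ B' \notin [set Bl; Bh].
    by move: B'X; rewrite /X in_set2 => /orP [] /eqP ->.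
  move: B'n; rewrite in_set2 => /norP [B'nl B'nh].
  have cBlB := Blmin _ B'M; have dBhB := Bhmax _ B'M.
  have BlS' : Bl \in S'.
    rewrite !inE BlS andbT; apply/orP; left; apply/norP; split.
      by apply: contra B1n => /eqP <-; rewrite in_set2 eqxx.
    by apply: contra B2n => /eqP <-; rewrite in_set2 eqxx.
  have BhS' : Bh \in S'.
    rewrite !inE BhS andbT; apply/orP; left; apply/norP; split.
      by apply: contra B1n => /eqP <-; rewrite in_set2 eqxx orbT.
    by apply: contra B2n => /eqP <-; rewrite in_set2 eqxx orbT.
  case/and4P: p'B' => Pp' _ cBp' p'dB.
  case: (ltrP (y p') (c v)) => h1.
    exists Bl => //; rewrite /st Pp' IBl (le_trans cBlB cBp') /=.
    by apply: le_trans d1Bl; apply: le_trans cv1; apply: ltW.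
  case: (ltrP (d v) (y p')) => h2.
    exists Bh => //; rewrite /st Pp' IBh (le_trans p'dB dBhB) andbT /=.
    by apply: le_trans cBh2 _; apply: le_trans d2v _; apply: ltW.
  by exists v; [rewrite !inE eqxx orbT | rewrite /st Pp' Iv h1 h2].
have hmin := minS _ cS'.
have hX : #|S :\: X| = (#|S| - 2)%N.
  rewrite cardsD; congr (_ - _)%N.
  have -> : S :&: X = X.
    by apply/setIidPr; apply/subsetP => w; rewrite in_set2 => /orP [] /eqP ->.
  by rewrite cards2 B12.
have hS' : (#|S'| <= #|S| - 2 + 1)%N.
  by rewrite /S' cardsU cards1 hX leq_subr.
have h2 : (2 <= #|S|)%N.
  have : (#|X| <= #|S|)%N.
    by apply: subset_leq_card; apply/subsetP => w; rewrite in_set2 => /orP [] /eqP ->.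
  by rewrite cards2 B12.
have H3 := leq_trans hmin hS'.
by move: H3 h2; generalize #|S|; clear; lia.
Qed.

Lemma stab1D : exists E : rel T,
  (forall a b, E a b -> st a b || st b a) /\
  (forall a, (#|[pred b | E a b]| <= 2 * isP a + 3 * isI a)%N) /\
  (forall p v, st p v ->
     exists a b, [&& E p a || E a p, E a b || E b a & E b v || E v b]).
Proof.
have [S [cS minS]] := min_cover.
pose tp B v := [pick t | st t B && st t v].
pose E1 a b := isP a && (b \in S) && st a b.
pose E2 a b := isI a && [exists B in S, tp B a == Some b].
exists (fun a b => E1 a b || E2 a b); split; [|split].
- move=> a b /orP [/andP [_ h] | /andP [_ /exists_inP [B BS]]]; first by rewrite h.
  rewrite /tp; case: pickP => // t /andP [_ h] /eqP [<-]; by rewrite h orbT.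
- move=> a.
  have -> : #|[pred b | E1 a b || E2 a b]| = #|[predU [pred b | E1 a b] & [pred b | E2 a b]]|.
    by apply: eq_card.
  apply: leq_trans (leq_addr #|[predI [pred b | E1 a b] & [pred b | E2 a b]]| _) _.
  rewrite cardUI; apply: leq_add.
    case: (boolP (isP a)) => Pa /=.
      apply: (@leq_trans #|[set B in S | st a B]|); last exact: leq_trans (K1 cS minS a) _.
      by apply: subset_leq_card; apply/subsetP => b; rewrite !inE /E1 Pa.
    rewrite leqn0; apply/eqP; apply: eq_card0 => b; by rewrite !inE /E1 (negbTE Pa).
  case: (boolP (isI a)) => Ia /=.
    apply: (@leq_trans #|(fun B => odflt a (tp B a)) @: [set B in S | meets B a]|).
      2: by apply: leq_trans (leq_imset_card _ _) (leq_trans (K2 cS minS Ia) _).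
    apply: subset_leq_card; apply/subsetP => b; rewrite !inE /E2 Ia /= => /exists_inP [B BS].
    move=> /eqP tpB; apply/imsetP; exists B; last by rewrite tpB.
    rewrite inE BS /=; move: tpB; rewrite /tp; case: pickP => // t tBa _.
    by apply/existsP; exists t.
  rewrite leqn0; apply/eqP; apply: eq_card0 => b; by rewrite !inE /E2 (negbTE Ia).
- move=> p v spv; have [_ Hc] := coverP cS; case: (Hc _ _ spv) => B BS pB.
  case Et: (tp B v) => [t|]; last first.
    by move: Et; rewrite /tp; case: pickP => // /(_ p); rewrite pB spv.
  move: (Et); rewrite /tp; case: pickP => // t' /andP [tB tv] [et]; subst t'.
  exists B, t; apply/and3P; split.
  + by rewrite /E1 BS pB; case/and4P: spv => ->.
  + by apply/orP; right; rewrite /E1 BS tB; case/and4P: tB => ->.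
  + apply/orP; right; apply/orP; right; rewrite /E2; case/and4P: spv => _ -> _ _ /=.
    by apply/exists_inP; exists B => //; rewrite Et.
Qed.

End Stab.

End MB.
Import MB.

Module MC.

Lemma card_sum (T : finType) (P : pred T) : #|[pred b | P b]| = \sum_b (P b : nat).
Proof.
rewrite -sum1_card big_mkcond /=; apply: eq_bigr => b _; by rewrite inE; case: (P b).
Qed.

Lemma card_exists (I T : finType) (F : I -> pred T) :
  #|[pred b | [exists i, F i b]]| <= \sum_i #|[pred b | F i b]|.
Proof.
rewrite card_sum (eq_bigr _ (fun i _ => card_sum (F i))) exchange_big /=.
apply: leq_sum => b _; case: existsP => [[i Fi]|] //=.
by rewrite (bigD1 i) //= Fi.
Qed.

Lemma canon_uniq (P Q X k1 k2 : nat) : 0 < X ->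
  P <= k1 * X -> k1.+1 * X <= Q -> ~~ ((P <= (k1 %/ 2) * (2 * X)) && ((k1 %/ 2).+1 * (2 * X) <= Q)) ->
  P <= k2 * X -> k2.+1 * X <= Q -> ~~ ((P <= (k2 %/ 2) * (2 * X)) && ((k2 %/ 2).+1 * (2 * X) <= Q)) ->
  odd k1 = odd k2 -> k1 = k2.
Proof.
move=> X0 a1 b1 /nandP c1 a2 b2 /nandP c2 o.
have e1 := odd_double_half k1; have e2 := odd_double_half k2.
rewrite -!divn2 in e1 e2.
move: c1 c2 e1 e2 o; rewrite -!ltnNge.
move: (k1 %/ 2) (k2 %/ 2) => m1 m2.
case: (odd k1) => /=; case: (odd k2) => //=.
- move=> c1 c2 e1 e2 _; nia.
- move=> c1 c2 e1 e2 _; nia.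
Qed.

Section Tree.
Variables (T : finType) (R : realFieldType) (L : nat) (isH isV : pred T)
  (r p q : T -> nat) (y c d : T -> R).
Hypothesis hr : forall v, isV v -> r v < #|T|.
Hypothesis hq : forall h, isH h -> q h <= #|T|.
Hypothesis hL : #|T| <= 2 ^ L.

Definition inside h j k := (p h <= k * 2 ^ j) && (k.+1 * 2 ^ j <= q h).
Definition canon h j k := inside h j k && ~~ inside h j.+1 (k %/ 2).
Definition Xr h v := [&& isH h, isV v, p h <= r v, r v < q h, (c v <= y h)%R & (y h <= d v)%R].

Lemma canon_exists h r0 : isH h -> p h <= r0 < q h ->
  exists j : 'I_L.+1, canon h j (r0 %/ 2 ^ j).
Proof.
move=> Hh /andP [pr rq].
have qL : q h <= 2 ^ L by apply: leq_trans (hq Hh) hL.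
suff H : forall i j, i + j = L -> inside h j (r0 %/ 2 ^ j) ->
  exists j' : 'I_L.+1, canon h j' (r0 %/ 2 ^ j').
  apply: (H L 0); first by rewrite addn0.
  by rewrite /inside expn0 divn1 !muln1 pr rq.
elim=> [|i IH] j e ins.
  exists (Ordinal (ltnSn L)) => /=; rewrite add0n in e; subst j.
  rewrite /canon ins /= /inside negb_and; apply/orP; right.
  rewrite -ltnNge; apply: leq_ltn_trans qL _; rewrite expnS.
  have X0 : 0 < 2 ^ L by rewrite expn_gt0.
  move: X0; move: (r0 %/ 2 ^ L %/ 2) => k; move: (2 ^ L) => X; clear; nia.
case: (boolP (inside h j.+1 (r0 %/ 2 ^ j %/ 2))) => ins'.
  apply: (IH j.+1); first by rewrite addnS -addSn.
  by rewrite expnS mulnC divnMA.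
have jL : j < L.+1 by rewrite -e; lia.
by exists (Ordinal jL); rewrite /canon ins ins'.
Qed.

Lemma canon_count h j : #|[pred k : 'I_#|T| | canon h j k]| <= 2.
Proof.
rewrite -(cardID (fun k : 'I_#|T| => odd k)).
have X0 : 0 < 2 ^ j by rewrite expn_gt0.
have U : forall k1 k2 : 'I_#|T|, canon h j k1 -> canon h j k2 -> odd k1 = odd k2 -> k1 = k2.
  move=> k1 k2 /andP [/andP [a1 b1] c1] /andP [/andP [a2 b2] c2] o; apply: val_inj => /=.
  apply: (canon_uniq X0 a1 b1 _ a2 b2 _ o).
    by move: c1; rewrite /inside expnS mulnC.
  by move: c2; rewrite /inside expnS mulnC.
apply: (leq_add (n1:=1) (n2:=1)).
  apply/card_le1_eqP => k1 k2; rewrite !inE => /andP [c1 o1] /andP [c2 o2].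
  have o1' : odd k1 := o1; have o2' : odd k2 := o2.
  by apply: U => //; rewrite o1' o2'.
apply/card_le1_eqP => k1 k2; rewrite !inE => /andP [o1 c1] /andP [o2 c2].
have o1' : ~~ odd k1 := o1; have o2' : ~~ odd k2 := o2.
by apply: U => //; rewrite (negbTE o1') (negbTE o2').
Qed.

Lemma tree_spanner : exists E : rel T,
  (forall a b, E a b -> Xr a b || Xr b a) /\
  (forall a, #|[pred b | E a b]| <= 7 * L.+1) /\
  (forall h v, Xr h v ->
     exists a b, [&& E h a || E a h, E a b || E b a & E b v || E v b]).
Proof.
pose Nd := ('I_L.+1 * 'I_#|T|)%type.
pose Pn (nd : Nd) h := isH h && canon h nd.1 nd.2.
pose In (nd : Nd) v := isV v && (r v %/ 2 ^ nd.1 == nd.2).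
have : forall nd : Nd, exists E : rel T,
  (forall a b, E a b -> st (Pn nd) (In nd) y c d a b || st (Pn nd) (In nd) y c d b a) /\
  (forall a, #|[pred b | E a b]| <= 2 * Pn nd a + 3 * In nd a) /\
  (forall p v, st (Pn nd) (In nd) y c d p v ->
     exists a b, [&& E p a || E a p, E a b || E b a & E b v || E v b]).
  by move=> nd; exact: stab1D.
case/fin_all_exists => En HEn.
have stX : forall nd a b, st (Pn nd) (In nd) y c d a b -> Xr a b.
  move=> [j k] a b /and4P [/andP [Ha ca] /andP [Vb /eqP rb] cb bd].
  rewrite /Xr Ha Vb cb bd /= andbT.
  move: ca => /andP [/andP [pa qa] _] /=.
  have X0 : 0 < 2 ^ j by rewrite expn_gt0.
  apply/andP; split.
    by apply: leq_trans pa _; rewrite /= -rb leq_divM.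
  by apply: leq_trans (ltn_ceil _ X0) _; rewrite rb.
exists (fun a b => [exists nd, En nd a b]); split; [|split].
- move=> a b /existsP [nd /(proj1 (HEn nd))] /orP [] /stX ->; by rewrite ?orbT.
- move=> a.
  have CE := card_exists (fun nd b => En nd a b); simpl in CE; apply: leq_trans CE _.
  apply: (@leq_trans (\sum_(nd : Nd) (2 * Pn nd a + 3 * In nd a))).
    by apply: leq_sum => nd _; exact: (proj1 (proj2 (HEn nd)) a).
  rewrite big_split /= -!big_distrr /=.
  have S1 : \sum_(nd : Nd) (Pn nd a : nat) <= 2 * L.+1.
    rewrite (eq_bigr (fun nd => (Pn (nd.1, nd.2) a : nat))); last by case.
    rewrite -(pair_bigA _ (fun j k => (Pn (j, k) a : nat))) /=.
    apply: (@leq_trans (\sum_(j < L.+1) 2)).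
      apply: leq_sum => j _; rewrite -card_sum; apply: leq_trans (canon_count a j).
      by apply: subset_leq_card; apply/subsetP => k; rewrite !inE /Pn /= => /andP [].
    by rewrite sum_nat_const card_ord mulnC.
  have S2 : \sum_(nd : Nd) (In nd a : nat) <= L.+1.
    rewrite (eq_bigr (fun nd => (In (nd.1, nd.2) a : nat))); last by case.
    rewrite -(pair_bigA _ (fun j k => (In (j, k) a : nat))) /=.
    apply: (@leq_trans (\sum_(j < L.+1) 1)).
      apply: leq_sum => j _; rewrite -card_sum; apply/card_le1_eqP => k1 k2; rewrite !inE /In /=.
      by move=> /andP [_ /eqP e1] /andP [_ /eqP e2]; apply: val_inj; rewrite /= -e1 -e2.
    by rewrite sum_nat_const card_ord muln1.
  move: S1 S2; move: (\sum_(nd : Nd) (Pn nd a : nat)) (\sum_(nd : Nd) (In nd a : nat)) => s1 s2.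
  clear; lia.
- move=> h v /and4P [Hh Vv prv /and3P [rqv cv vd]].
  case: (canon_exists Hh (r0 := r v)); first by rewrite prv rqv.
  move=> j cj.
  have kl : r v %/ 2 ^ j < #|T| by apply: leq_ltn_trans (leq_div _ _) (hr Vv).
  pose nd : Nd := (j, Ordinal kl).
  have sthv : st (Pn nd) (In nd) y c d h v.
    by rewrite /st /Pn /In /= Hh Vv cj eqxx cv vd.
  case: (proj2 (proj2 (HEn nd)) _ _ sthv) => a [b /and3P [e1 e2 e3]].
  have lift : forall x z, En nd x z -> [exists nd, En nd x z].
    by move=> x z ex; apply/existsP; exists nd.
  exists a, b; apply/and3P; split.
  + by case/orP: e1 => /lift ->; rewrite ?orbT.
  + by case/orP: e2 => /lift ->; rewrite ?orbT.
  + by case/orP: e3 => /lift ->; rewrite ?orbT.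
Qed.

End Tree.

End MC.
Import MC.

Module MD.

Section RealTree.
Variables (T : finType) (R : realFieldType) (isH isV : pred T) (x a b y c d : T -> R).

Definition rk v := #|[set w | isV w && (x w < x v)%R]|.
Definition pp h := #|[set w | isV w && (x w < a h)%R]|.
Definition qq h := #|[set w | isV w && (x w <= b h)%R]|.
Definition Xreal h v :=
  [&& isH h, isV v, (a h <= x v)%R, (x v <= b h)%R, (c v <= y h)%R & (y h <= d v)%R].

Lemma le_rank h v : isV v -> (pp h <= rk v) = (a h <= x v)%R.
Proof.
move=> Vv; case: (lerP (a h) (x v)) => H.
  apply: subset_leq_card; apply/subsetP => w; rewrite !inE => /andP [-> /= xw].
  exact: lt_le_trans xw H.
apply/negbTE; rewrite -ltnNge; apply: proper_card; apply/properP; split.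
  apply/subsetP => w; rewrite !inE => /andP [-> /= xw]; exact: lt_trans xw H.
by exists v; rewrite !inE Vv ?H ?ltxx.
Qed.

Lemma lt_rank h v : isV v -> (rk v < qq h) = (x v <= b h)%R.
Proof.
move=> Vv; case: (lerP (x v) (b h)) => H.
  apply: proper_card; apply/properP; split.
    apply/subsetP => w; rewrite !inE => /andP [-> /= xw]; exact: ltW (lt_le_trans xw H).
  by exists v; rewrite !inE Vv ?H ?ltxx.
apply/negbTE; rewrite -leqNgt; apply: subset_leq_card; apply/subsetP => w.
rewrite !inE => /andP [-> /= xw]; exact: le_lt_trans xw H.
Qed.

Lemma Xr_real h v : Xr isH isV rk pp qq y c d h v = Xreal h v.
Proof.
rewrite /Xr /Xreal; case: (boolP (isH h)) => //= _; case: (boolP (isV v)) => //= Vv.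
by rewrite le_rank // lt_rank.
Qed.

Lemma real_spanner : exists E : rel T,
  (forall u w, E u w -> Xreal u w || Xreal w u) /\
  (forall u, #|[pred w | E u w]| <= 7 * (up_log 2 #|T|).+1) /\
  (forall h v, Xreal h v ->
     exists a b, [&& E h a || E a h, E a b || E b a & E b v || E v b]).
Proof.
have hr : forall v, isV v -> rk v < #|T|.
  move=> v Vv; have : rk v <= #|[set~ v]|.
    by apply: subset_leq_card; apply/subsetP => w; rewrite !inE => /andP [_ xw]; apply: contraTneq xw => ->; rewrite ltxx.
  rewrite cardsC1; have : 0 < #|T| by apply/card_gt0P; exists v.
  by case: #|T|.
have hq : forall h, isH h -> qq h <= #|T| by move=> h _; exact: max_card.
have hL : #|T| <= 2 ^ up_log 2 #|T| by apply: up_logP.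
case: (tree_spanner pp y c d hr hq hL) => E [H1 [H2 H3]].
exists E; split; [|split] => //.
- by move=> u w /H1; rewrite !Xr_real.
- by move=> h v; rewrite -Xr_real; apply: H3.
Qed.

End RealTree.

End MD.
Import MD.

Module ME.
Local Open Scope ring_scope.

Section Geo.
Variable R : realFieldType.

Definition lo (u v : R) := if u <= v then u else v.
Definition hi (u v : R) := if u <= v then v else u.

Lemma lo_le_hi u v : lo u v <= hi u v.
Proof. rewrite /lo /hi; case: ifP => // /negbT; rewrite -ltNge => /ltW //. Qed.

Lemma lo_le u v : lo u v <= u.
Proof. rewrite /lo; case: ifP => // /negbT; rewrite -ltNge => /ltW //. Qed.
Lemma lo_le' u v : lo u v <= v.
Proof. rewrite /lo; case: ifP => //. Qed.
Lemma le_hi u v : u <= hi u v.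
Proof. rewrite /hi; case: ifP => // /negbT; rewrite -ltNge => /ltW //. Qed.
Lemma le_hi' u v : v <= hi u v.
Proof. rewrite /hi; case: ifP => // /negbT; rewrite -ltNge => /ltW //. Qed.

Lemma conv_iff (u1 u2 w : R) :
  (exists t : R, 0 <= t /\ t <= 1 /\ w = (1 - t) * u1 + t * u2) <->
  (lo u1 u2 <= w /\ w <= hi u1 u2).
Proof.
split.
  move=> [t [t0 [t1 ->]]]; rewrite /lo /hi; case: ifP => h; split; nra.
move=> [h1 h2].
case: (eqVneq u1 u2) => [e|ne].
  subst u2; exists 0; split; first exact: lexx.
  split; first exact: ler01.
  move: h1 h2; rewrite /lo /hi lexx => h1 h2.
  have -> : w = u1 by apply/eqP; rewrite eq_le h1 h2.
  by ring.
move: h1 h2; rewrite /lo /hi; case: ifP => h h1 h2.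
  have pos : 0 < u2 - u1 by rewrite subr_gt0 lt_neqAle ne h.
  have ne' : u2 - u1 != 0 by rewrite gt_eqF.
  exists ((w - u1) / (u2 - u1)).
  split; first by apply: divr_ge0; lra.
  split; first by rewrite ler_pdivrMr // mul1r; lra.
  by field.
have pos : 0 < u1 - u2 by move/negbT: h; rewrite -ltNge subr_gt0.
have ne' : u1 - u2 != 0 by rewrite gt_eqF.
exists ((u1 - w) / (u1 - u2)).
split; first by apply: divr_ge0; lra.
split; first by rewrite ler_pdivrMr // mul1r; lra.
by field.
Qed.

Lemma on_segV (s : segment R) z : s.1.1 = s.2.1 ->
  on_seg s z <-> (z.1 = s.1.1 /\ lo s.1.2 s.2.2 <= z.2 /\ z.2 <= hi s.1.2 s.2.2).
Proof.
case: s => [[x1 y1] [x2 y2]] /= e; subst x2; case: z => [zx zy] /=.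
split.
  move=> [t [t0 [t1 [-> ->]]]] /=; split; first by ring.
  by apply/conv_iff; exists t.
move=> [-> /conv_iff [t [t0 [t1 ->]]]]; exists t; do 2 split => //.
by congr (_, _); rewrite /=; ring.
Qed.

Lemma on_segH (s : segment R) z : s.1.2 = s.2.2 ->
  on_seg s z <-> (z.2 = s.1.2 /\ lo s.1.1 s.2.1 <= z.1 /\ z.1 <= hi s.1.1 s.2.1).
Proof.
case: s => [[x1 y1] [x2 y2]] /= e; subst y2; case: z => [zx zy] /=.
split.
  move=> [t [t0 [t1 [-> ->]]]] /=; split; first by ring.
  by apply/conv_iff; exists t.
move=> [-> /conv_iff [t [t0 [t1 ->]]]]; exists t; do 2 split => //.
by congr (_, _); rewrite /=; ring.
Qed.

End Geo.

End ME.
Import ME.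

Module MF.
Local Open Scope ring_scope.

Section Main.
Variables (R : realFieldType) (n : nat) (s : 'I_n -> segment R).
Hypothesis hv : forall i, hv_segment (s i).

Definition X1 i := (s i).1.1.
Definition Y1 i := (s i).1.2.
Definition X2 i := (s i).2.1.
Definition Y2 i := (s i).2.2.
Definition isVt i := X1 i == X2 i.
Definition isHt i := ~~ isVt i.
Definition loX i := lo (X1 i) (X2 i).
Definition hiX i := hi (X1 i) (X2 i).
Definition loY i := lo (Y1 i) (Y2 i).
Definition hiY i := hi (Y1 i) (Y2 i).

Lemma Hflat i : isHt i -> Y1 i = Y2 i.
Proof. by rewrite /isHt /isVt /X1 /X2 /Y1 /Y2; case: (hv i) => [->|//]; rewrite eqxx. Qed.

Lemma onV i z : isVt i -> on_seg (s i) z <-> (z.1 = X1 i /\ loY i <= z.2 /\ z.2 <= hiY i).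
Proof. by move=> /eqP h; apply: on_segV. Qed.

Lemma onH i z : isHt i -> on_seg (s i) z <-> (z.2 = Y1 i /\ loX i <= z.1 /\ z.1 <= hiX i).
Proof. by move=> /Hflat h; apply: on_segH. Qed.

Definition XA := Xreal isHt isVt X1 loX hiX Y1 loY hiY.
Definition XB := Xreal isHt isHt loX loX hiX Y1 Y1 Y1.
Definition XC := Xreal isVt isVt loY loY hiY X1 X1 X1.

Lemma seg_int_sym u w : seg_intersect (s u) (s w) -> seg_intersect (s w) (s u).
Proof. by case=> z [h1 h2]; exists z. Qed.

Lemma XA_int u w : XA u w -> seg_intersect (s u) (s w).
Proof.
case/andP => Hu /and5P [Vw a1 a2 a3 a4].
exists (X1 w, Y1 u); split.
  by apply/onH => //=; split => //.
by apply/onV => //=; split => //.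
Qed.

Lemma XB_int u w : XB u w -> seg_intersect (s u) (s w).
Proof.
case/andP => Hu /and5P [Hw a1 a2 a3 a4].
have e : Y1 w = Y1 u by apply/eqP; rewrite eq_le a3 a4.
exists (loX w, Y1 u); split.
  by apply/onH => //=; split => //.
apply/onH => //=; split => //; split; first exact: lexx.
exact: lo_le_hi.
Qed.

Lemma XC_int u w : XC u w -> seg_intersect (s u) (s w).
Proof.
case/andP => Vu /and5P [Vw a1 a2 a3 a4].
have e : X1 w = X1 u by apply/eqP; rewrite eq_le a3 a4.
exists (X1 u, loY w); split.
  by apply/onV => //=; split => //.
apply/onV => //=; split => //; split; first exact: lexx.
exact: lo_le_hi.
Qed.

Lemma ig_X u w : ig_edge s u w ->
  [|| XA u w, XA w u, XB u w, XB w u, XC u w | XC w u].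
Proof.
case=> _ [[zx zy] [hu hw]].
case: (boolP (isVt u)) => Vu; case: (boolP (isVt w)) => Vw.
- move: hu hw => /(onV _ Vu) [/= e1 [l1 h1]] /(onV _ Vw) [/= e2 [l2 h2]].
  case: (lerP (loY u) (loY w)) => hlo.
    apply/orP; right; apply/orP; right; apply/orP; right; apply/orP; right; apply/orP; left.
    rewrite /XC /Xreal Vu Vw hlo -e1 -e2 lexx /=.
    by rewrite andbT; exact: le_trans l2 h1.
  do 5 (apply/orP; right).
  rewrite /XC /Xreal Vu Vw (ltW hlo) -e1 -e2 lexx /=.
  by rewrite andbT; exact: le_trans l1 h2.
- have Hw : isHt w by [].
  move: hu hw => /(onV _ Vu) [/= e1 [l1 h1]] /(onH _ Hw) [/= e2 [l2 h2]].
  apply/orP; right; apply/orP; left.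
  by rewrite /XA /Xreal Hw Vu -e1 -e2 l1 h1 l2 h2.
- have Hu : isHt u by [].
  move: hu hw => /(onH _ Hu) [/= e1 [l1 h1]] /(onV _ Vw) [/= e2 [l2 h2]].
  apply/orP; left.
  by rewrite /XA /Xreal Hu Vw -e1 -e2 l1 h1 l2 h2.
- have Hu : isHt u by [].
  have Hw : isHt w by [].
  move: hu hw => /(onH _ Hu) [/= e1 [l1 h1]] /(onH _ Hw) [/= e2 [l2 h2]].
  case: (lerP (loX u) (loX w)) => hlo.
    apply/orP; right; apply/orP; right; apply/orP; left.
    rewrite /XB /Xreal Hu Hw hlo -e1 -e2 lexx /=.
    by rewrite andbT; exact: le_trans l2 h1.
  apply/orP; right; apply/orP; right; apply/orP; right; apply/orP; left.
  rewrite /XB /Xreal Hu Hw (ltW hlo) -e1 -e2 lexx /=.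
  by rewrite andbT; exact: le_trans l1 h2.
Qed.

End Main.

End MF.
Import MF.

Module MG.

Lemma walk_path (T : finType) (S : rel T) u a b w :
  S u a -> S a b -> S b w -> u != w -> hop_path (fun x y => (x != y) && S x y) 3 u w.
Proof.
move=> Sua Sab Sbw uw.
have one : S u w -> hop_path (fun x y => (x != y) && S x y) 3 u w.
  by move=> Suw; exists [:: w]; rewrite /= uw Suw.
case: (eqVneq u a) => [ea|ua].
  subst a; case: (eqVneq u b) => [eb|ub]; first by subst b; apply: one.
  case: (eqVneq b w) => [eb|bw]; first by subst b; apply: one.
  by exists [:: b; w]; rewrite /= ub Sab bw Sbw.
case: (eqVneq a w) => [ea|aw]; first by subst a; apply: one.
case: (eqVneq a b) => [eb|ab].
  by subst b; exists [:: a; w]; rewrite /= ua Sua aw Sbw.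
case: (eqVneq b w) => [eb|bw].
  by subst b; exists [:: a; w]; rewrite /= ua Sua aw Sab.
by exists [:: a; b; w]; rewrite /= ua Sua ab Sab bw Sbw.
Qed.

Lemma cards_sum (T : finType) (P : pred T) : #|[set x | P x]| = \sum_x (P x : nat).
Proof.
rewrite -sum1dep_card big_mkcond /=; apply: eq_bigr => x _; by case: (P x).
Qed.

Lemma count6 (T : finType) (E1 E2 E3 : rel T) K :
  (forall u, #|[pred w | E1 u w]| <= K) -> (forall u, #|[pred w | E2 u w]| <= K) ->
  (forall u, #|[pred w | E3 u w]| <= K) ->
  #|[set p : T * T | [|| E1 p.1 p.2, E1 p.2 p.1, E2 p.1 p.2, E2 p.2 p.1, E3 p.1 p.2 | E3 p.2 p.1]]|
  <= 6 * #|T| * K.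
Proof.
move=> h1 h2 h3.
pose F u w := [|| E1 u w, E1 w u, E2 u w, E2 w u, E3 u w | E3 w u].
pose f u w := (E1 u w : nat) + E2 u w + E3 u w.
rewrite cards_sum -(pair_bigA _ (fun u w => (F u w : nat))) /=.
apply: (@leq_trans (\sum_u \sum_w (f u w + f w u))).
  apply: leq_sum => u _; apply: leq_sum => w _; rewrite /F /f.
  by case: (E1 u w); case: (E1 w u); case: (E2 u w); case: (E2 w u); case: (E3 u w); case: (E3 w u).
have hf : \sum_u \sum_w f u w <= #|T| * (3 * K).
  rewrite -sum_nat_const; apply: leq_sum => u _.
  rewrite /f !big_split /= -!card_sum.
  apply: leq_trans (leq_add (leq_add (h1 u) (h2 u)) (h3 u)) _; lia.
rewrite (eq_bigr (fun u => \sum_w f u w + \sum_w f w u)); last by move=> u _; rewrite big_split.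
rewrite big_split /= [X in _ + X <= _]exchange_big /=.
apply: leq_trans (leq_add hf hf) _; move: #|T| => m; clear; nia.
Qed.

End MG.
Import MG.


Lemma lift_walk (T : finType) (E S : rel T) :
  (forall x y, E x y -> S x y) -> (forall x y, S x y = S y x) ->
  forall h v, (exists a b, [&& E h a || E a h, E a b || E b a & E b v || E v b]) ->
  h != v ->
  hop_path (fun x y => (x != y) && S x y) 3 h v /\ hop_path (fun x y => (x != y) && S x y) 3 v h.
Proof.
move=> ES Ssym h v [a [b /and3P [e1 e2 e3]]] hv.
have lf : forall x y, E x y || E y x -> S x y.
  by move=> x y /orP [/ES //| /ES]; rewrite Ssym.
have s1 := lf _ _ e1; have s2 := lf _ _ e2; have s3 := lf _ _ e3.
split; first exact: walk_path s1 s2 s3 hv.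
by apply: (walk_path (a := b) (b := a)); rewrite 1?Ssym // eq_sym.
Qed.

Theorem lemma19 :
  exists C : nat, forall (R : realFieldType) (n : nat) (s : 'I_n -> segment R),
    injective s -> (forall i, hv_segment (s i)) ->
    exists H : rel 'I_n,
      hop_spanner (ig_edge s) H 3 /\ (n_edges H <= C * n * up_log 2 n)%N.
Proof.
exists 84 => R n s _ hv.
have [E1 [A1 [B1 C1]]] := real_spanner (isHt s) (isVt s) (X1 s) (loX s) (hiX s) (Y1 s) (loY s) (hiY s).
have [E2 [A2 [B2 C2]]] := real_spanner (isHt s) (isHt s) (loX s) (loX s) (hiX s) (Y1 s) (Y1 s) (Y1 s).
have [E3 [A3 [B3 C3]]] := real_spanner (isVt s) (isVt s) (loY s) (loY s) (hiY s) (X1 s) (X1 s) (X1 s).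
pose S u w := [|| E1 u w, E1 w u, E2 u w, E2 w u, E3 u w | E3 w u].
have Ssym : forall u w, S u w = S w u.
  move=> u w; rewrite /S.
  by case: (E1 u w); case: (E1 w u); case: (E2 u w); case: (E2 w u); case: (E3 u w); case: (E3 w u).
pose H u w := (u != w) && S u w.
exists H; split; [split; [|split]|].
- by move=> u w; rewrite /H eq_sym Ssym.
- move=> u w /andP [uw Suw]; split; first exact/eqP.
  move: Suw; rewrite /S => /orP [h|/orP [h|/orP [h|/orP [h|/orP [h|h]]]]].
  + by case/orP: (A1 _ _ h) => h'; [exact: (XA_int hv (h' : XA s u w)) | apply: seg_int_sym; exact: (XA_int hv (h' : XA s w u))].
  + by case/orP: (A1 _ _ h) => h'; [apply: seg_int_sym; exact: (XA_int hv (h' : XA s w u)) | exact: (XA_int hv (h' : XA s u w))].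
  + by case/orP: (A2 _ _ h) => h'; [exact: (XB_int hv (h' : XB s u w)) | apply: seg_int_sym; exact: (XB_int hv (h' : XB s w u))].
  + by case/orP: (A2 _ _ h) => h'; [apply: seg_int_sym; exact: (XB_int hv (h' : XB s w u)) | exact: (XB_int hv (h' : XB s u w))].
  + by case/orP: (A3 _ _ h) => h'; [exact: (XC_int (h' : XC s u w)) | apply: seg_int_sym; exact: (XC_int (h' : XC s w u))].
  + by case/orP: (A3 _ _ h) => h'; [apply: seg_int_sym; exact: (XC_int (h' : XC s w u)) | exact: (XC_int (h' : XC s u w))].
- move=> u w ig; have uw : u != w by case: ig => /eqP.
  have wu : w != u by rewrite eq_sym.
  have S1 : forall x y, E1 x y -> S x y by move=> x y e; rewrite /S e.
  have S2 : forall x y, E2 x y -> S x y by move=> x y e; rewrite /S e !orbT.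
  have S3 : forall x y, E3 x y -> S x y by move=> x y e; rewrite /S e !orbT.
  move: (ig_X hv ig) => /orP [h|/orP [h|/orP [h|/orP [h|/orP [h|h]]]]].
  + exact: (proj1 (lift_walk S1 Ssym (C1 _ _ h) uw)).
  + exact: (proj2 (lift_walk S1 Ssym (C1 _ _ h) wu)).
  + exact: (proj1 (lift_walk S2 Ssym (C2 _ _ h) uw)).
  + exact: (proj2 (lift_walk S2 Ssym (C2 _ _ h) wu)).
  + exact: (proj1 (lift_walk S3 Ssym (C3 _ _ h) uw)).
  + exact: (proj2 (lift_walk S3 Ssym (C3 _ _ h) wu)).
- case: (leqP n 1) => n1.
    suff -> : n_edges H = 0%N by [].
    apply/eqP; rewrite /n_edges cards_eq0; apply/eqP/setP => [[x1 x2]]; rewrite !inE /=.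
    have := ltn_ord x2; have := ltn_ord x1; move: n1; move: (val x1) (val x2) => a b.
    by case: (H _ _) => /=; lia.
  have L1 : (0 < up_log 2 n)%N by rewrite up_log_gt0.
  apply: (@leq_trans #|[set p : 'I_n * 'I_n | S p.1 p.2]|).
    by apply: subset_leq_card; apply/subsetP => p; rewrite !inE => /andP [/andP [_ ->]].
  apply: leq_trans (count6 B1 B2 B3) _.
  rewrite card_ord; move: L1; move: (up_log 2 n) => L; clear; nia.
Qed.
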